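(* Let $\mathcal M=(S,A,P)$ be an MDP, $T\subseteq S$ a set of sink target states, $\mathcal M'$ the pruned MDP and $s_0\in S'$. For every strategy $\sigma\in\Sigma^{\mathrm{Opt}}_{\mathcal M}$, $$\Pr'_{\sigma,s_0}(\Diamond T)=\frac{\Pr_{\sigma,s_0}(\Diamond T)}{\mathrm{Val}(s_0)}.$$
   Context: An MDP is $\mathcal M=(S,A,P)$ with $S,A$ finite and $P$ a partial map $S\times A\to\mathrm{Dist}(S)$; $a$ is legal at $s$ if $P(s,a)$ is defined; $P(s,a,s')=P(s,a)(s')$. A strategy maps finite paths $s_0a_0\dots s_n$ (with $a_i$ legal at $s_i$, $P(s_i,a_i,s_{i+1})>0$) to distributions over legal actions at the last state. $\Pr_{\sigma,s}$ is the induced probability measure on infinite paths from $s$. States of $T$ are sinks; $\Diamond T$ is the event of visiting $T$; $\mathrm{Val}(s)=\max_\sigma\Pr_{\sigma,s}(\Diamond T)$. $\mathrm{Opt}_{\mathcal M}=\{(s,a): a\text{ legal at }s,\ \mathrm{Val}(s)=\sum_{s'}P(s,a,s')\mathrm{Val}(s')\}$; $\Sigma^{\mathrm{Opt}}_{\mathcal M}$ is the set of strategies that, after every finite path $\rho$, only give positive probability to actions $a$ with $(\mathrm{last}(\rho),a)\in\mathrm{Opt}_{\mathcal M}$. The pruned MDP $\mathcal M'=(S',A,P')$ has $S'=\{s:\mathrm{Val}(s)>0\}$ and $P'(s,a,s')=P(s,a,s')\mathrm{Val}(s')/\mathrm{Val}(s)$ if $s\in S'$ and $(s,a)\in\mathrm{Opt}_{\mathcal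 M}$ (undefined otherwise). Strategies in $\Sigma^{\mathrm{Opt}}_{\mathcal M}$ are identified with strategies of $\mathcal M'$ by restriction to finite paths of $\mathcal M'$; $\Pr'_{\sigma,s}$ is the induced measure in $\mathcal M'$. *)

(* Defs.v *)
From HB Require Import structures.
From mathcomp Require Import all_boot all_order all_algebra.
From mathcomp Require Import classical_sets reals.
Set Implicit Arguments. Unset Strict Implicit. Unset Printing Implicit Defensive.
Import Order.TTheory GRing.Theory Num.Theory.
Local Open Scope classical_set_scope.
Local Open Scope ring_scope.

(* An MDP over finite state type S and action type A is given by
   [legal : S -> A -> bool] (a legal at s iff P(s,a) is defined) and
   [P : S -> A -> S -> R] (P s a s' = P(s,a)(s'), meaningful only when legal s a). *)

Definition is_MDP (R : realType) (S A : finType)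
  (legal : S -> A -> bool) (P : S -> A -> S -> R) : Prop :=
  forall s a, legal s a -> (forall s', 0 <= P s a s') /\ \sum_(s' : S) P s a s' = 1.

Definition sinks (R : realType) (S A : finType)
  (legal : S -> A -> bool) (P : S -> A -> S -> R) (T : {set S}) : Prop :=
  forall t, t \in T -> forall a, legal t a -> P t a t = 1.

(* A finite path s_0 a_0 s_1 ... a_{n-1} s_n is represented by s_0 and the
   list [:: (a_0,s_1); ...; (a_{n-1},s_n)]. *)
Definition lastst (S A : Type) (s0 : S) (p : seq (A * S)) : S :=
  last s0 (map snd p).

Fixpoint valid_from (R : realType) (S A : Type)
  (legal : S -> A -> bool) (P : S -> A -> S -> R) (s : S) (p : seq (A * S)) : bool :=
  match p with
  | [::] => true
  | (a, s') :: p' => [&& legal s a, 0 < P s a s' & valid_from legal P s' p']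
  end.

Definition is_strategy (R : realType) (S A : finType)
  (legal : S -> A -> bool) (P : S -> A -> S -> R)
  (sigma : S -> seq (A * S) -> A -> R) : Prop :=
  forall s0 p, valid_from legal P s0 p ->
    [/\ forall a, 0 <= sigma s0 p a,
        \sum_(a : A) sigma s0 p a = 1 &
        forall a, 0 < sigma s0 p a -> legal (lastst s0 p) a].

Fixpoint cyl_aux (R : realType) (S A : Type) (P : S -> A -> S -> R)
  (sigma : S -> seq (A * S) -> A -> R) (s0 : S) (pre : seq (A * S)) (s : S)
  (p : seq (A * S)) : R :=
  match p with
  | [::] => 1
  | (a, s') :: p' =>
      sigma s0 pre a * P s a s' * cyl_aux P sigma s0 (rcons pre (a, s')) s' p'
  end.

Definition cyl (R : realType) (S A : Type) (P : S -> A -> S -> R)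
  (sigma : S -> seq (A * S) -> A -> R) (s0 : S) (p : seq (A * S)) : R :=
  cyl_aux P sigma s0 [::] s0 p.

Definition visits (S A : finType) (T : {set S}) (s0 : S) (p : seq (A * S)) : bool :=
  (s0 \in T) || has (fun x => x.2 \in T) p.

Definition reach_within (R : realType) (S A : finType) (P : S -> A -> S -> R)
  (sigma : S -> seq (A * S) -> A -> R) (T : {set S}) (s0 : S) (n : nat) : R :=
  \sum_(p : n.-tuple (A * S) | visits T s0 p) cyl P sigma s0 p.

(* Pr_{sigma,s0}(<> T) = sup_n Pr_{sigma,s0}(T visited within n steps)
   (continuity of the path measure from below) *)
Definition PrReach (R : realType) (S A : finType) (P : S -> A -> S -> R)
  (sigma : S -> seq (A * S) -> A -> R) (T : {set S}) (s0 : S) : R :=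
  sup (range (reach_within P sigma T s0)).

Definition Val (R : realType) (S A : finType)
  (legal : S -> A -> bool) (P : S -> A -> S -> R) (T : {set S}) (s : S) : R :=
  sup [set PrReach P sigma T s | sigma in is_strategy legal P].

Definition Opt (R : realType) (S A : finType)
  (legal : S -> A -> bool) (P : S -> A -> S -> R) (T : {set S}) (s : S) (a : A) : bool :=
  legal s a && (Val legal P T s == \sum_(s' : S) P s a s' * Val legal P T s').

Definition opt_strategy (R : realType) (S A : finType)
  (legal : S -> A -> bool) (P : S -> A -> S -> R) (T : {set S})
  (sigma : S -> seq (A * S) -> A -> R) : Prop :=
  is_strategy legal P sigma /\
  forall s0 p a, valid_from legal P s0 p -> 0 < sigma s0 p a ->
    Opt legal P T (lastst s0 p) a.

Definition Spos (R : realType) (S A : finType)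
  (legal : S -> A -> bool) (P : S -> A -> S -> R) (T : {set S}) : pred S :=
  fun s => 0 < Val legal P T s.

Definition Sprime (R : realType) (S A : finType)
  (legal : S -> A -> bool) (P : S -> A -> S -> R) (T : {set S}) : finType :=
  {s : S | Spos legal P T s}.

Definition legal' (R : realType) (S A : finType)
  (legal : S -> A -> bool) (P : S -> A -> S -> R) (T : {set S})
  (s : Sprime legal P T) (a : A) : bool :=
  Opt legal P T (val s) a.

Definition P' (R : realType) (S A : finType)
  (legal : S -> A -> bool) (P : S -> A -> S -> R) (T : {set S})
  (s : Sprime legal P T) (a : A) (s' : Sprime legal P T) : R :=
  P (val s) a (val s') * Val legal P T (val s') / Val legal P T (val s).

Definition T' (R : realType) (S A : finType)
  (legal : S -> A -> bool) (P : S -> A -> S -> R) (T : {set S}) :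
  {set Sprime legal P T} := [set s | val s \in T].

Definition restrict (R : realType) (S A : finType)
  (legal : S -> A -> bool) (P : S -> A -> S -> R) (T : {set S})
  (sigma : S -> seq (A * S) -> A -> R) :
  Sprime legal P T -> seq (A * Sprime legal P T) -> A -> R :=
  fun s0 p => sigma (val s0) (map (fun x => (x.1, val x.2)) p).

(* Main.v *)
Require Import Defs.
From HB Require Import structures.
From mathcomp Require Import all_boot all_order all_algebra.
From mathcomp Require Import classical_sets boolp reals ring.
Set Implicit Arguments. Unset Strict Implicit. Unset Printing Implicit Defensive.
Import Order.TTheory GRing.Theory Num.Theory.
Local Open Scope ring_scope.

Lemma sum_tuple_cons (R : realType) (X : finType) n (F : n.+1.-tuple X -> R) :
  \sum_(t : n.+1.-tuple X) F t = \sum_(x : X) \sum_(t : n.-tuple X) F [tuple of x :: t].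
Proof.
rewrite pair_big /= (reindex (fun p : X * n.-tuple X => [tuple of p.1 :: p.2])) //.
exists (fun t : n.+1.-tuple X => (thead t, [tuple of behead t])).
  by case=> x t _; congr pair; apply: val_inj.
by move=> t _; rewrite [RHS]tuple_eta.
Qed.

Section Aux.
Variables (R : realType) (S A : finType) (legal : S -> A -> bool) (P : S -> A -> S -> R).
Hypothesis HM : is_MDP legal P.

Lemma lastst_cat (s : S) (p q : seq (A * S)) : lastst s (p ++ q) = lastst (lastst s p) q.
Proof. by rewrite /lastst map_cat last_cat. Qed.

Lemma lastst_rcons (s : S) (p : seq (A * S)) x : lastst s (rcons p x) = x.2.
Proof. by rewrite /lastst map_rcons last_rcons. Qed.

Lemma valid_cat (s : S) (p q : seq (A * S)) :
  valid_from legal P s (p ++ q) = valid_from legal P s p && valid_from legal P (lastst s p) q.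
Proof.
elim: p s => [|[a s'] p IH] s //=.
by rewrite IH !andbA.
Qed.

Lemma valid_rcons (s0 : S) pre a s' :
  valid_from legal P s0 (rcons pre (a, s')) =
  valid_from legal P s0 pre && (legal (lastst s0 pre) a && (0 < P (lastst s0 pre) a s')).
Proof. by rewrite -cats1 valid_cat /= andbT. Qed.

Variable sigma : S -> seq (A * S) -> A -> R.

Lemma cyl_aux_cat s0 pre s (q1 q2 : seq (A * S)) :
  cyl_aux P sigma s0 pre s (q1 ++ q2) =
  cyl_aux P sigma s0 pre s q1 * cyl_aux P sigma s0 (pre ++ q1) (lastst s q1) q2.
Proof.
elim: q1 pre s => [|[a s'] q1 IH] pre s /=; first by rewrite cats0 mul1r.
by rewrite IH cat_rcons !mulrA.
Qed.

Hypothesis Hs : is_strategy legal P sigma.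

Lemma cyl_ge0 (q : seq (A * S)) s0 pre : valid_from legal P s0 pre ->
  0 <= cyl_aux P sigma s0 pre (lastst s0 pre) q.
Proof.
elim: q pre => [|[a s'] q IH] pre Hv /=; first by [].
have [sg0 _ sgl] := Hs Hv.
have := sg0 a; rewrite le0r => /orP [/eqP->|sp]; first by rewrite !mul0r.
have lg := sgl a sp.
have [Pge _] := HM lg.
have := Pge s'; rewrite le0r => /orP [/eqP->|pp]; first by rewrite mulr0 mul0r.
have := IH (rcons pre (a, s')); rewrite lastst_rcons /= => H.
apply: mulr_ge0; first by apply: mulr_ge0; [exact: sg0 | exact: ltW].
apply: H.
by rewrite valid_rcons Hv lg pp.
Qed.

Lemma cyl_nz_valid (q : seq (A * S)) s0 pre : valid_from legal P s0 pre ->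
  cyl_aux P sigma s0 pre (lastst s0 pre) q != 0 -> valid_from legal P (lastst s0 pre) q.
Proof.
elim: q pre => [|[a s'] q IH] pre Hv /=; first by [].
have [sg0 _ sgl] := Hs Hv.
have := sg0 a; rewrite le0r => /orP [/eqP->|sp]; first by rewrite !mul0r eqxx.
have lg := sgl a sp.
have [Pge _] := HM lg.
have := Pge s'; rewrite le0r => /orP [/eqP->|pp]; first by rewrite mulr0 mul0r eqxx.
move=> nz; rewrite lg pp /=.
have := IH (rcons pre (a, s')); rewrite lastst_rcons; apply.
  by rewrite valid_rcons Hv lg pp.
by apply: contraNneq nz => ->; rewrite mulr0.
Qed.

Lemma cyl_mass n s0 pre : valid_from legal P s0 pre ->
  \sum_(q : n.-tuple (A * S)) cyl_aux P sigma s0 pre (lastst s0 pre) q = 1.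
Proof.
elim: n pre => [|n IH] pre Hv.
  rewrite (big_pred1 [tuple]) // => t /=; rewrite [t]tuple0; exact/esym/eqP.
rewrite sum_tuple_cons.
have [sg0 sg1 sgl] := Hs Hv.
set s := lastst s0 pre.
have E : forall x : A * S, \sum_(t : n.-tuple (A * S)) cyl_aux P sigma s0 pre s [tuple of x :: t]
     = sigma s0 pre x.1 * P s x.1 x.2.
  case=> a s' /=.
  rewrite -big_distrr /=.
  have := sg0 a; rewrite le0r => /orP [/eqP->|sp]; first by rewrite !mul0r.
  have lg := sgl a sp.
  have [Pge _] := HM lg.
  have := Pge s'; rewrite le0r => /orP [/eqP->|pp]; first by rewrite mulr0 mul0r.
  have := IH (rcons pre (a, s')); rewrite lastst_rcons => -> ; first by rewrite mulr1.
  by rewrite valid_rcons Hv lg pp.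
rewrite (eq_bigr _ (fun x _ => E x)).
rewrite -(pair_bigA _ (fun a s' => sigma s0 pre a * P s a s')) /=.
rewrite -[RHS]sg1; apply: eq_bigr => a _.
rewrite -big_distrr /=.
have := sg0 a; rewrite le0r => /orP [/eqP->|sp]; first by rewrite !mul0r.
have [_ ->] := HM (sgl a sp); by rewrite mulr1.
Qed.

End Aux.
Lemma sup_const (R : realType) (E : set R) c : (exists x, E x) -> (forall x, E x -> x = c) -> sup E = c.
Proof.
move=> [y Ey] HE.
have -> : E = [set c]%classic.
  apply/seteqP; split=> x /=; first by move/HE.
  by move=> ->; rewrite -(HE y Ey).
exact: sup1.
Qed.

Section Aux2.
Variables (R : realType) (S A : finType) (legal : S -> A -> bool) (P : S -> A -> S -> R) (T : {set S}).
Hypothesis HM : is_MDP legal P.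
Hypothesis HT : sinks legal P T.

Lemma reach_le1 sigma s n : is_strategy legal P sigma -> reach_within P sigma T s n <= 1.
Proof.
move=> Hs; rewrite /reach_within.
rewrite -(cyl_mass HM Hs n (s0:=s) (pre:=[::])) //.
rewrite [X in _ <= X](bigID (fun p : n.-tuple (A * S) => visits T s p)) /= lerDl.
by apply: sumr_ge0 => p _; apply: (cyl_ge0 HM Hs).
Qed.

Lemma reach_le_Pr sigma s n : is_strategy legal P sigma ->
  reach_within P sigma T s n <= PrReach P sigma T s.
Proof.
move=> Hs; apply: ub_le_sup; last by exists n.
by exists 1 => x [m _ <-]; apply: reach_le1.
Qed.

Lemma Pr_le1 sigma s : is_strategy legal P sigma -> PrReach P sigma T s <= 1.
Proof.
move=> Hs; apply: ge_sup; first by exists (reach_within P sigma T s 0), 0%N.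
by move=> x [m _ <-]; apply: reach_le1.
Qed.

Lemma Pr_le_Val sigma s : is_strategy legal P sigma ->
  PrReach P sigma T s <= Val legal P T s.
Proof.
move=> Hs; apply: ub_le_sup; last by exists sigma.
by exists 1 => x [tau Ht <-]; apply: Pr_le1.
Qed.

Lemma Val_T sigma t : is_strategy legal P sigma -> t \in T -> Val legal P T t = 1.
Proof.
move=> Hs tT; apply: sup_const; first by exists (PrReach P sigma T t), sigma.
move=> x [tau Ht <-]; apply: sup_const; first by exists (reach_within P tau T t 0), 0%N.
move=> y [n _ <-]; rewrite /reach_within.
rewrite (eq_bigl predT); last by move=> p; rewrite /visits tT.
exact: (cyl_mass HM Ht n (s0:=t) (pre:=[::])).
Qed.

Lemma sink_step t a s' : t \in T -> legal t a -> 0 < P t a s' -> s' = t.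
Proof.
move=> tT lg pp; apply/eqP; apply: contraTT pp => ne.
have [Pge Psum] := HM lg.
move: Psum; rewrite (bigD1 t) //= HT // => /(congr1 (fun x => x - 1)); rewrite addrC addrK subrr => H.
have := psumr_eq0P (fun i _ => Pge i) H ne => ->; by rewrite ltxx.
Qed.

Lemma visits_cat s0 (q1 q2 : seq (A * S)) : valid_from legal P s0 (q1 ++ q2) ->
  visits T s0 (q1 ++ q2) -> visits T (lastst s0 q1) q2.
Proof.
elim: q1 s0 => [|[a s'] q1 IH] s0 //= /and3P [lg pp Hv] Hvis.
apply: IH => //.
case/orP: Hvis => [s0T|/orP [s'T|h]]; rewrite /visits.
- by rewrite (sink_step s0T lg pp) s0T.
- by rewrite s'T.
- by apply/orP; right; exact: h.
Qed.

Section Shift.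
Variable sigma : S -> seq (A * S) -> A -> R.
Hypothesis Hs : is_strategy legal P sigma.
Variables (s0 : S) (pre : seq (A * S)).
Hypothesis Hv : valid_from legal P s0 pre.

Definition shift : S -> seq (A * S) -> A -> R :=
  fun s' q => if s' == lastst s0 pre then sigma s0 (pre ++ q) else sigma s' q.

Lemma shift_cyl q r s' : cyl_aux P shift (lastst s0 pre) r s' q = cyl_aux P sigma s0 (pre ++ r) s' q.
Proof.
elim: q r s' => [|[a s''] q IH] r s' //=.
by rewrite IH /shift eqxx rcons_cat.
Qed.

Lemma shift_strat : is_strategy legal P shift.
Proof.
move=> s' q Hq; rewrite /shift; case: eqP => [E|_]; last exact: Hs.
rewrite E in Hq *.
have := Hs (s0:=s0) (p:=pre ++ q); rewrite lastst_cat valid_cat Hv Hq; apply; done.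
Qed.

Lemma cyl_zero q : Val legal P T (lastst s0 pre) <= 0 -> visits T (lastst s0 pre) q ->
  cyl_aux P sigma s0 pre (lastst s0 pre) q = 0.
Proof.
move=> V0 Hvis.
rewrite -[pre in cyl_aux _ _ _ pre]cats0 -shift_cyl.
have Ht := shift_strat.
apply/le_anti/andP; split; last first.
  exact: (cyl_ge0 HM Ht q (s0:=lastst s0 pre) (pre:=[::])).
apply: le_trans V0.
apply: le_trans (Pr_le_Val _ Ht).
apply: le_trans (reach_le_Pr _ (size q) Ht).
rewrite /reach_within (bigD1 (in_tuple q)) //= lerDl.
by apply: sumr_ge0 => p _; apply: (cyl_ge0 HM Ht).
Qed.

End Shift.

Lemma zero_out sigma s0 (p : seq (A * S)) : is_strategy legal P sigma ->
  visits T s0 p -> ~~ all (fun x => Spos legal P T x.2) p -> cyl P sigma s0 p = 0.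
Proof.
move=> Hs Hvis /allPn [x xin Hx].
case: (eqVneq (cyl P sigma s0 p) 0) => // nz.
have Hv : valid_from legal P s0 p := cyl_nz_valid HM Hs (pre:=[::]) (s0:=s0) isT nz.
move: Hvis Hv nz; case/splitPr: xin => q1 q2.
rewrite -cat_rcons => Hvis Hv.
rewrite /cyl cyl_aux_cat /=.
have Hv1 : valid_from legal P s0 (rcons q1 x) by move: Hv; rewrite valid_cat => /andP [].
rewrite (@cyl_zero sigma Hs s0 (rcons q1 x) Hv1 q2).
- by rewrite mulr0 eqxx.
- by rewrite lastst_rcons leNgt.
- by rewrite lastst_rcons; rewrite -(lastst_rcons s0 q1 x); apply: visits_cat.
Qed.

End Aux2.
Lemma sup_div (R : realType) (f : nat -> R) c : 0 < c -> (forall n, f n <= 1) ->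
  sup (range (fun n => f n / c))%classic = sup (range f)%classic / c.
Proof.
move=> c0 f1.
have hub : has_ubound (range f)%classic by exists 1 => x [n _ <-].
have hub' : has_ubound (range (fun n => f n / c))%classic.
  by exists (1 / c) => x [n _ <-]; rewrite ler_pM2r ?invr_gt0.
apply/le_anti/andP; split.
  apply: ge_sup; first by exists (f 0%N / c), 0%N.
  move=> x [n _ <-]; rewrite ler_pM2r ?invr_gt0 //.
  by apply: ub_le_sup => //; exists n.
rewrite ler_pdivrMr //; apply: ge_sup; first by exists (f 0%N), 0%N.
move=> x [n _ <-]; rewrite -ler_pdivrMr //.
by apply: ub_le_sup => //; exists n.
Qed.

Lemma alg_step (R : realType) (x y c c' vs vs'' vl : R) : vs != 0 ->
  c' * vs'' = c * vl -> x * (y * vs'' / vs) * c' * vs = x * y * c * vl.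
Proof.
move=> nz E.
have -> : x * (y * vs'' / vs) * c' * vs = x * y * (c' * vs'') * (vs / vs) by ring.
by rewrite divff // mulr1 E mulrA.
Qed.

Section Main.
Variables (R : realType) (S A : finType) (legal : S -> A -> bool) (P : S -> A -> S -> R) (T : {set S}).
Hypothesis HM : is_MDP legal P.
Hypothesis HT : sinks legal P T.
Variable s0' : Sprime legal P T.
Variable sigma : S -> seq (A * S) -> A -> R.
Hypothesis Hs : is_strategy legal P sigma.

Definition mapx (x : A * Sprime legal P T) : A * S := (x.1, val x.2).

Lemma Vpos (s : Sprime legal P T) : 0 < Val legal P T (val s).
Proof. exact: (valP s). Qed.

Lemma tele (q' : seq (A * Sprime legal P T)) pre' (s : Sprime legal P T) :
  cyl_aux (P' (T:=T)) (restrict (T:=T) sigma) s0' pre' s q' * Val legal P T (val s) =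
  cyl_aux P sigma (val s0') (map mapx pre') (val s) (map mapx q')
    * Val legal P T (lastst (val s) (map mapx q')).
Proof.
elim: q' pre' s => [|[a s''] q IH] pre' s /=; first by rewrite !mul1r.
have IH' := IH (rcons pre' (a, s'')) s''; rewrite map_rcons in IH'.
rewrite /P' /restrict.
apply: alg_step; first by rewrite gt_eqF // Vpos.
exact: IH'.
Qed.

Lemma visitsE (q' : seq (A * Sprime legal P T)) :
  visits (T' legal P T) s0' q' = visits T (val s0') (map mapx q').
Proof.
rewrite /visits inE has_map; congr orb; apply: eq_has => x.
by rewrite /= inE.
Qed.

Lemma reach_eq n :
  reach_within (P' (T:=T)) (restrict (T:=T) sigma) (T' legal P T) s0' n
  = reach_within P sigma T (val s0') n / Val legal P T (val s0').
Proof.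
have V0 := Vpos s0'.
rewrite /reach_within mulr_suml.
rewrite (eq_bigr (fun q' : n.-tuple _ => cyl P sigma (val s0') (map mapx q') / Val legal P T (val s0'))); last first.
  move=> q' vis.
  have E := tele q' [::] s0'.
  rewrite /cyl -[LHS]mulr1 -(divff (lt0r_neq0 V0)) mulrA E.
  case: (eqVneq (cyl_aux P sigma (val s0') [::] (val s0') (map mapx q')) 0) => [->|nz].
    by rewrite !mul0r.
  have Hv := cyl_nz_valid HM Hs (pre:=[::]) (s0:=val s0') isT nz.
  rewrite visitsE in vis.
  have := visits_cat HM HT (s0:=val s0') (q1:=map mapx q') (q2:=[::]); rewrite cats0 => /(_ Hv vis).
  rewrite /visits orbF => lT.
  by rewrite (Val_T HM Hs lT) mulr1.
rewrite (bigID (fun p : n.-tuple (A * S) => all (fun x => Spos legal P T x.2) p)) /=.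
rewrite [X in _ = _ + X]big1 ?addr0; last first.
  by move=> p /andP [vis nall]; rewrite (zero_out HM HT Hs vis nall) mul0r.
rewrite (reindex_onto (fun q : n.-tuple (A * Sprime legal P T) => map_tuple mapx q)
   (fun p : n.-tuple (A * S) => map_tuple (fun x => (x.1, insubd s0' x.2)) p)) /=; last first.
  move=> p /andP [_ /allP Hall]; apply: val_inj => /=.
  rewrite -map_comp; apply: map_id_in => x xin /=.
  rewrite /mapx /= insubdK //; last exact: (Hall x xin).
  by case: x {xin}.
apply: eq_bigl => q /=.
have -> : map_tuple (fun x => (x.1, insubd s0' x.2)) (map_tuple mapx q) == q.
  apply/eqP/val_inj => /=; rewrite -map_comp; apply: map_id_in => x _ /=.
  by rewrite /mapx /= valKd -surjective_pairing.
rewrite andbT visitsE all_map.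
have -> : all (preim mapx (fun x => Spos legal P T x.2)) q.
  by apply/allP => x _; exact: (Vpos x.2).
by rewrite andbT.
Qed.

End Main.

Theorem lemma4 (R : realType) (S A : finType)
  (legal : S -> A -> bool) (P : S -> A -> S -> R) (T : {set S}) :
  is_MDP legal P -> sinks legal P T ->
  forall (s0 : Sprime legal P T) (sigma : S -> seq (A * S) -> A -> R),
    opt_strategy legal P T sigma ->
    PrReach (P' (T := T)) (restrict (T := T) sigma) (T' legal P T) s0
    = PrReach P sigma T (val s0) / Val legal P T (val s0).
Proof.
move=> HM HT s0 sigma [Hs _].
rewrite /PrReach.
have -> : reach_within (P' (T:=T)) (restrict (T:=T) sigma) (T' legal P T) s0
  = (fun n => reach_within P sigma T (val s0) n / Val legal P T (val s0)).
  by apply: funext => n; apply: reach_eq.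
apply: sup_div; first exact: Vpos.
move=> n; exact: (reach_le1 T HM _ _ Hs).
Qed.
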